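(* Let $n\ge 1$, let $\boldsymbol{u}^\star\in\mathbb{R}^n\setminus\{\boldsymbol{0}\}$, and define $f:\mathbb{R}^n\to\mathbb{R}$ by $f(\boldsymbol{u})=\frac12\|\boldsymbol{u}\boldsymbol{u}^{\mathrm T}-\boldsymbol{u}^\star{\boldsymbol{u}^\star}^{\mathrm T}\|_1$. Then the set of stationary points of $f$ is $$\{\boldsymbol{u}\in\mathbb{R}^n:\boldsymbol{0}\in\partial f(\boldsymbol{u})\}=\Big\{\boldsymbol{u}\in\mathbb{R}^n:\ |u_i|\le|u_i^\star|\ \text{for all } i\in[n],\ \ \sum_{i:\,u_i^\star\neq 0}\operatorname{sgn}(u_i^\star)\,u_i=0\Big\}\cup\{\boldsymbol{u}^\star,-\boldsymbol{u}^\star\}.$$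
   Context: For a matrix $\boldsymbol{X}$, $\|\boldsymbol{X}\|_1=\sum_{i,j}|x_{ij}|$ (entrywise $\ell_1$-norm). $[n]=\{1,\dots,n\}$. $\partial f$ denotes the subdifferential of $f$; since $f$ is locally Lipschitz and subdifferentially regular, the Fréchet, limiting and Clarke subdifferentials of $f$ coincide, and any of them may be used. Explicitly, $\partial f(\boldsymbol{u})=\{\boldsymbol{Z}\boldsymbol{u}:\boldsymbol{Z}\text{ symmetric},\ \boldsymbol{Z}\in\operatorname{Sign}(\boldsymbol{u}\boldsymbol{u}^{\mathrm T}-\boldsymbol{u}^\star{\boldsymbol{u}^\star}^{\mathrm T})\}$, where $\operatorname{Sign}(x)=\{x/|x|\}$ for $x\ne0$, $\operatorname{Sign}(0)=[-1,1]$, applied entrywise. A point $\boldsymbol{u}$ is stationary if $\boldsymbol{0}\in\partial f(\boldsymbol{u})$. (The condition $|u_i|\le|u_i^\star|$ forces $u_i=0$ whenever $u_i^\star=0$.) *)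

(* Defs.v *)
From HB Require Import structures.
From mathcomp Require Import all_boot all_order all_algebra.
From mathcomp Require Import reals.
Set Implicit Arguments. Unset Strict Implicit. Unset Printing Implicit Defensive.
Import Order.TTheory GRing.Theory Num.Theory.
Local Open Scope ring_scope.

Definition in_Sign (R : realType) (x z : R) : Prop :=
  if x != 0 then z = x / `|x| else -1 <= z <= 1.

Definition lossmx (R : realType) (n : nat) (u us : 'cV[R]_n) : 'M[R]_n :=
  u *m u^T - us *m us^T.

(* Subdifferential of f(u) = 1/2 || u u^T - us us^T ||_1 (entrywise l1),
   as given explicitly in the context:
   { Z u : Z symmetric, Z \in Sign(u u^T - us us^T) entrywise }. *)
Definition subdiff (R : realType) (n : nat) (us u : 'cV[R]_n) (g : 'cV[R]_n) : Prop :=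
  exists Z : 'M[R]_n, Z^T = Z /\
    (forall i j, in_Sign (lossmx u us i j) (Z i j)) /\ g = Z *m u.

Definition stationary (R : realType) (n : nat) (us u : 'cV[R]_n) : Prop :=
  subdiff us u 0.

(* Main.v *)
From HB Require Import structures.
From mathcomp Require Import all_boot all_order all_algebra.
From mathcomp Require Import reals lra ring.
Import Order.TTheory GRing.Theory Num.Theory.
Local Open Scope ring_scope.
Require Import Defs.

Lemma core (R : realType) (n : nat) (u s : 'I_n -> R) (Z : 'I_n -> 'I_n -> R)
 (hs : forall i, 0 <= s i) (hsym : forall i j, Z i j = Z j i)
 (hZ1 : forall i j, `|Z i j| <= 1)
 (hZM : forall i j, Z i j * (u i * u j - s i * s j) = `|u i * u j - s i * s j|)
 (hrow : forall i, \sum_(j < n) Z i j * u j = 0) :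
 ((forall i, `|u i| <= s i) /\ \sum_(i < n) u i = 0) \/
   (forall i, u i = s i) \/ (forall i, u i = - s i).
Proof.
have Zge : forall i j, -1 <= Z i j <= 1 by move=> i j; rewrite -ler_norml hZ1.
have Zp : forall i j, 0 < u i * u j - s i * s j -> Z i j = 1.
  move=> i j hM; have := hZM i j; rewrite gtr0_norm // => h.
  by apply: (mulIf (lt0r_neq0 hM)); rewrite /= mul1r.
have Zn : forall i j, u i * u j - s i * s j < 0 -> Z i j = -1.
  move=> i j hM; have := hZM i j; rewrite ltr0_norm // => h.
  by apply: (mulIf (ltr0_neq0 hM)); rewrite /= mulN1r.
have Qneg : forall j m, `|u j| < s j -> `|u m| <= s m -> u m != 0 ->
    u j * u m - s j * s m < 0.
  move=> j m hj hm um0.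
  have h1 : u j * u m <= `|u j| * `|u m| by rewrite -normrM ler_norm.
  have h2 : 0 < `|u m| by rewrite normr_gt0.
  have := hs j; have := hs m; nra.
have noP : forall i, `|u i| <= s i.
  move=> i; rewrite leNgt; apply/negP => hi.
  have ui0 : 0 < `|u i| by apply: le_lt_trans (hs i) hi.
  have rowX : forall l, \sum_(m < n) Z l m * (u i * u m) = 0.
    move=> l; under eq_bigr => m _ do rewrite mulrCA.
    by rewrite -mulr_sumr hrow mulr0.
  have G : forall m, (if (0 < u i * u m) && (`|u m| < s m)
                      then - `|u i * u m| else `|u i * u m|) <= Z i m * (u i * u m).
    move=> m; have /andP[hZa hZb] := Zge i m.
    case: ifP => [/andP[am um]|hc].
      rewrite gtr0_norm //; nra.
    have [am0|am0|->] := ltgtP (u i * u m) 0.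
    - rewrite ltr0_norm // (Zn i m) ?mulN1r //.
      have := hs i; have := hs m; nra.
    - rewrite am0 /= in hc; move/negbT: hc; rewrite -leNgt => hm.
      rewrite gtr0_norm // (Zp i m) ?mul1r //.
      have e : u i * u m = `|u i| * `|u m| by rewrite -normrM gtr0_norm.
      have um0 : 0 < `|u m|.
        rewrite normr_gt0; apply: contraTneq am0 => ->; by rewrite mulr0 ltxx.
      rewrite e; have := hs i; have := hs m; nra.
    - by rewrite normr0 mulr0.
  have H : forall l, `|u l| < s l -> forall m, Z l m * (u i * u m) <=
      (if s m < `|u m| then `|u i * u m| else - (u i * u m)).
    move=> l hl m; case: ifP => hm.
      apply: le_trans (ler_norm _) _; rewrite normrM.
      have := hZ1 l m; have := normr_ge0 (u i * u m); nra.
    move/negbT: hm; rewrite -leNgt => hm.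
    have [->|um0] := eqVneq (u m) 0; first by rewrite !mulr0 oppr0.
    by rewrite (Zn l m) ?mulN1r ?mulrN ?mulNr //; apply: Qneg.
  case: (pickP (fun l => (0 < u i * u l) && (`|u l| < s l))) => [l /andP[al ul] | nol].
  - have D : forall m, true -> 0 <= Z i m * (u i * u m) - Z l m * (u i * u m).
      move=> m _; rewrite subr_ge0; apply: le_trans (G m).
      apply: le_trans (H l ul m) _.
      case: (boolP ((0 < u i * u m) && (`|u m| < s m))) => [/andP[c1 c2]|c].
        by rewrite ltNge (ltW c2) /= gtr0_norm.
      case: ifP => _; first by [].
      by rewrite -normrN ler_norm.
    have S0 : \sum_(m < n) (Z i m * (u i * u m) - Z l m * (u i * u m)) = 0.
      by rewrite sumrB !rowX subrr.
    have Dz := psumr_eq0P D S0.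
    have e1 : Z i l = -1.
      have d := Dz l isT; have g := G l; rewrite al ul /= gtr0_norm // in g.
      have h := H l ul l; rewrite ltNge (ltW ul) /= in h.
      apply: (mulIf (lt0r_neq0 al)); rewrite /= mulN1r; lra.
    have e2 : Z l i = 1.
      have ai : 0 < u i * u i.
        have [h|h|h] := ltgtP (u i) 0; [nra|nra|].
        by move: ui0; rewrite h normr0 ltxx.
      have d := Dz i isT; have g := G i; rewrite [`|u i| < s i]ltNge (ltW hi) andbF /= in g.
      have h := H l ul i; rewrite hi /= in h.
      rewrite gtr0_norm // in g h.
      apply: (mulIf (lt0r_neq0 ai)); rewrite /= mul1r; lra.
    have := hsym i l; rewrite e1 e2 => h; lra.
  - have h : \sum_(m < n) `|u i * u m| <= 0.
      rewrite -[X in _ <= X](rowX i); apply: ler_sum => m _.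
      have c := nol m; simpl in c; by move: (G m); rewrite c.
    rewrite (bigD1 i) //= in h.
    have h2 : 0 <= \sum_(m < n | m != i) `|u i * u m| by apply: sumr_ge0.
    have : 0 < `|u i * u i| by rewrite normrM mulr_gt0.
    lra.
have Qcase : forall j, `|u j| < s j -> \sum_(m < n) u m = 0.
  move=> j hj; have h : \sum_(m < n) - u m = 0.
    rewrite -[X in _ = X](hrow j); apply: eq_bigr => m _.
    have [->|um0] := eqVneq (u m) 0; first by rewrite mulr0 oppr0.
    by rewrite (Zn j m) ?mulN1r //; apply: Qneg.
  by move: h; rewrite sumrN => /eqP; rewrite oppr_eq0 => /eqP.
case: (pickP (fun j => `|u j| < s j)) => [j hj | noQ].
  by left; split; [exact: noP | exact: (Qcase j)].
have eqs : forall m, `|u m| = s m.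
  move=> m; have := noQ m; simpl => c; apply/eqP; rewrite eq_le noP /=.
  by rewrite leNgt c.
case: (pickP (fun a => 0 < u a)) => [a ha | nopos];
  case: (pickP (fun b => u b < 0)) => [b hb | noneg].
- left; split; first exact: noP.
  have h1 : \sum_(m < n) - u m <= 0.
    rewrite -[X in _ <= X](hrow a); apply: ler_sum => m _.
    have /andP[hZa hZb] := Zge a m.
    have [um|um] := leP 0 (u m); first nra.
    rewrite (Zn a m) ?mulN1r //; have := hs a; have := hs m; nra.
  have h2 : 0 <= \sum_(m < n) - u m.
    rewrite -[X in X <= _](hrow b); apply: ler_sum => m _.
    have /andP[hZa hZb] := Zge b m.
    have [um|um] := leP (u m) 0; first nra.
    rewrite (Zn b m) ?mulN1r //; have := hs b; have := hs m; nra.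
  rewrite sumrN in h1 h2; lra.
- right; left => m; have := noneg m; simpl => c.
  have : 0 <= u m by rewrite leNgt c.
  by move=> h; rewrite -eqs ger0_norm.
- right; right => m; have := nopos m; simpl => c.
  have : u m <= 0 by rewrite leNgt c.
  by move=> h; rewrite -eqs ler0_norm ?opprK.
- right; left => m; have := nopos m; have := noneg m; simpl => c1 c2.
  have : u m = 0 by apply/eqP; rewrite eq_le leNgt c2 leNgt c1.
  by move=> h; rewrite -eqs h normr0.
Qed.

Theorem theorem1 (R : realType) (n : nat) (hn : (1 <= n)%N)
  (us : 'cV[R]_n) (hus : us != 0) (u : 'cV[R]_n) :
  stationary us u <->
  (((forall i : 'I_n, `|u i 0| <= `|us i 0|) /\
     \sum_(i < n | us i 0 != 0) Num.sg (us i 0) * u i 0 = 0)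
   \/ u = us \/ u = - us).
Proof.
have lossE : forall i j, lossmx u us i j = u i 0 * u j 0 - us i 0 * us j 0.
  by move=> i j; rewrite /lossmx !mxE !big_ord1 !mxE.
split.
- move=> [Z [hZs [hZ hg]]].
  have hrow : forall i, \sum_(j < n) Z i j * u j 0 = 0.
    move=> i; have := congr1 (fun M : 'cV[R]_n => M i 0) hg; rewrite !mxE => h.
    by rewrite -h.
  have hsym : forall i j, Z i j = Z j i by move=> i j; rewrite -{1}hZs mxE.
  have hS : forall i j, `|Z i j| <= 1 /\ Z i j * lossmx u us i j = `|lossmx u us i j|.
    move=> i j; have := hZ i j; rewrite /in_Sign.
    set M := lossmx u us i j.
    have [Mn|Mp|->] := ltgtP M 0.
    + rewrite /= ltr0_norm // => ->.
      rewrite divrN divff ?ltr0_neq0 // normrN normr1; split => //; ring.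
    + rewrite /= gtr0_norm // => ->.
      rewrite divff ?lt0r_neq0 // normr1; split => //; ring.
    + rewrite /= mulr0 normr0 => h; split => //; by rewrite ler_norml.
  pose sig i : R := if us i 0 < 0 then -1 else 1.
  have sq1 : forall i, sig i * sig i = 1.
    by move=> i; rewrite /sig; case: ifP => _; rewrite ?mulrNN mulr1.
  have nsig : forall i, `|sig i| = 1.
    by move=> i; rewrite /sig; case: ifP => _; rewrite ?normrN normr1.
  have sigus : forall i, sig i * us i 0 = `|us i 0|.
    move=> i; rewrite /sig; case: ifP => h.
      by rewrite mulN1r ltr0_norm.
    by rewrite mul1r ger0_norm // leNgt h.
  have := @core R n (fun i => sig i * u i 0) (fun i => `|us i 0|)
     (fun i j => sig i * sig j * Z i j).
  case.
  + by move=> i.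
  + by move=> i j /=; rewrite hsym; ring.
  + move=> i j /=; rewrite !normrM !nsig !mul1r; exact: (proj1 (hS i j)).
  + move=> i j /=.
    have e : sig i * u i 0 * (sig j * u j 0) - `|us i 0| * `|us j 0| =
       sig i * sig j * lossmx u us i j by rewrite lossE -!sigus; ring.
    rewrite e !normrM !nsig !mul1r -(proj2 (hS i j)).
    have -> : sig i * sig j * Z i j * (sig i * sig j * lossmx u us i j) =
      (sig i * sig i) * (sig j * sig j) * (Z i j * lossmx u us i j) by ring.
    by rewrite !sq1 !mul1r.
  + move=> i /=.
    transitivity (sig i * \sum_(j < n) Z i j * u j 0); last by rewrite hrow mulr0.
    rewrite mulr_sumr; apply: eq_bigr => j _.
    have -> : sig i * sig j * Z i j * (sig j * u j 0) =
      sig i * (sig j * sig j) * (Z i j * u j 0) by ring.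
    by rewrite sq1 mulr1.
  + move=> [hle hsum].
    left; split.
        by move=> i; have := hle i; rewrite normrM nsig mul1r.
      rewrite -[RHS]hsum big_mkcond /=; apply: eq_bigr => i _.
      case: ifP => h.
        rewrite /sig; have [hl|hg'|he'] := ltgtP (us i 0) 0.
        - by rewrite ltr0_sg.
        - by rewrite gtr0_sg.
        - by move: h; rewrite he' eqxx.
      move/negbT: h; rewrite negbK => /eqP h.
      have := hle i; rewrite normrM nsig mul1r h normr0 normr_le0 => /eqP ->.
      by rewrite mulr0.
  + move=> [he|he].
    * right; left; apply/matrixP => i j; rewrite (ord1 j).
      have := he i => /= h.
      by rewrite -[u i 0]mul1r -(sq1 i) -mulrA h -sigus mulrA sq1 mul1r.
    * right; right; apply/matrixP => i j; rewrite (ord1 j) mxE.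
      have := he i => /= h.
      by rewrite -[u i 0]mul1r -(sq1 i) -mulrA h -sigus mulrN mulrA sq1 mul1r.
- move=> [[hle hsum]|[->|->]].
  + exists (\matrix_(i, j) (- (Num.sg (us i 0) * Num.sg (us j 0)))).
    split; [|split].
    * by apply/matrixP => i j; rewrite !mxE mulrC.
    * move=> i j; rewrite /in_Sign lossE mxE -sgrM.
      set a := us i 0 * us j 0; set b := u i 0 * u j 0.
      have hab : `|b| <= `|a| by rewrite /a /b !normrM ler_pM.
      case: ifP => hM.
        have [ha|ha|ha] := ltgtP a 0.
        - have hb : a < b.
            rewrite lt_def; move: hM; rewrite subr_eq0 => -> /=.
            have := ler_norm (- b); rewrite normrN => hnb; rewrite (ltr0_norm ha) in hab; lra.
          rewrite ltr0_sg // opprK gtr0_norm ?subr_gt0 // divff // subr_eq0; exact: gt_eqF.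
        - have hb : b < a.
            rewrite lt_def; move: hM; rewrite subr_eq0 eq_sym => -> /=.
            have := ler_norm b; rewrite (gtr0_norm ha) in hab; lra.
          rewrite gtr0_sg // ltr0_norm ?subr_lt0 // divrN divff ?opprK // subr_eq0; exact: lt_eqF.
        - move: hab; rewrite ha normr0 normr_le0 => /eqP hb.
          by move: hM; rewrite hb ha subrr eqxx.
      rewrite -ler_norml normrN normr_sg.
      by case: (a != 0); rewrite ?ler01 ?lexx.
    * apply/matrixP => i j; rewrite (ord1 j) !mxE.
      transitivity (- Num.sg (us i 0) * \sum_(k < n) Num.sg (us k 0) * u k 0).
        rewrite -[LHS](mulr0 (- Num.sg (us i 0))) -[X in _ * X = _]hsum big_mkcond /=; congr (_ * _).
        by apply: eq_bigr => k _; case: ifP => // /negbT; rewrite negbK => /eqP ->; rewrite sgr0 mul0r.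
      rewrite mulr_sumr; apply: eq_bigr => k _; rewrite !mxE; ring.
  + exists 0; split; [|split].
    * by rewrite trmx0.
    * move=> i j; rewrite /in_Sign /lossmx subrr !mxE eqxx /=; lra.
    * by rewrite mul0mx.
  + exists 0; split; [|split].
    * by rewrite trmx0.
    * move=> i j; rewrite /in_Sign /lossmx linearN /= mulNmx mulmxN opprK subrr !mxE eqxx /=; lra.
    * by rewrite mul0mx.
Qed.
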